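(* Let $n$ be an integer and let $G_{n}=\langle s,t\mid swt^{-1}w^{-1}=1\rangle$ with $w=(ts^{-1}tst^{-1}s)^n$ (this is the fundamental group of the exterior of the two-bridge knot with Conway's notation $C(2n,3)$). For $M\in\mathbb{C}\setminus\{0\}$ and $x\in\mathbb{C}$ define \[ \rho(s)=\begin{pmatrix} M & 1\\ 0 & M^{-1}\end{pmatrix},\qquad \rho(t)=\begin{pmatrix} M & 0\\ 2-M^{2}-M^{-2}-x & M^{-1}\end{pmatrix}. \] Then $\rho$ defines a representation $G_n\to \mathrm{SL}(2,\mathbb{C})$ if and only if $x$ is a root of the Riley–Mednykh polynomial $P_{2n}=P_{2n}(x,M)$ given explicitly by \[ P_{2n}=\sum_{i=0}^{2n}\binom{n+\lfloor i/2\rfloor}{i}M^{4n}\left(M^{2}+M^{-2}+x-1\right)^{i}(-x)^{\lfloor (1+i)/2\rfloor}\quad\text{if } n\ge 0, \] \[ P_{2n}=\sum_{i=0}^{-2n-1}\binom{-n+\lfloor (i-1)/2\rfloor}{i}M^{-4n-2}\left(-M^{2}-M^{-2}-x+1\right)^{i}(-x)^{\lfloor (1+i)/2\rfloor}\quad\text{if } n<0. \]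
   Context: $\binom{a}{b}$ denotes the usual binomial coefficient and $\lfloor\cdot\rfloor$ the floor function. ''$\rho$ defines a representation'' means that the assignment on the generators $s,t$ respects the relation $swt^{-1}w^{-1}=1$. *)

(* Defs.v *)
From HB Require Import structures.
From mathcomp Require Import all_boot all_order all_algebra.
From mathcomp Require Import complex.
From mathcomp Require Import reals.
Set Implicit Arguments. Unset Strict Implicit. Unset Printing Implicit Defensive.
Import Order.TTheory GRing.Theory Num.Theory.
Local Open Scope ring_scope.

Definition rho_s (C : fieldType) (M : C) : 'M[C]_2 :=
  \matrix_(i < 2, j < 2)
    if i == 0 then (if j == 0 then M else 1) else (if j == 0 then 0 else M^-1).

Definition rho_t (C : fieldType) (M x : C) : 'M[C]_2 :=
  \matrix_(i < 2, j < 2)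
    if i == 0 then (if j == 0 then M else 0)
    else (if j == 0 then 2 - M ^+ 2 - M ^- 2 - x else M^-1).

Definition word_w (C : fieldType) (n : int) (S T : 'M[C]_2) : 'M[C]_2 :=
  (T * S^-1 * T * S * T^-1 * S) ^ n.

Definition defines_rep (C : fieldType) (n : int) (S T : 'M[C]_2) : Prop :=
  let W := word_w n S T in S * W * T^-1 * W^-1 = 1.

(* Riley--Mednykh polynomial P_{2n}(x, M), evaluated.
   n = Posz k (n = k >= 0):
     sum_{i=0}^{2k} C(k + floor(i/2), i) M^{4k} (M^2+M^-2+x-1)^i (-x)^{floor((1+i)/2)}
   n = Negz k (n = -(k+1) < 0), m := -n = k+1:
     sum_{i=0}^{2m-1} C(m + floor((i-1)/2), i) M^{4m-2} (-M^2-M^-2-x+1)^i (-x)^{floor((1+i)/2)}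
   where m + floor((i-1)/2) = floor((2m+i-1)/2) = (2m+i).-1 %/ 2 (all quantities >= 0). *)
Definition P2n (C : fieldType) (n : int) (x M : C) : C :=
  match n with
  | Posz k =>
      \sum_(i < (2 * k).+1)
        ('C(k + i %/ 2, i))%:R * M ^+ (4 * k)
          * (M ^+ 2 + M ^- 2 + x - 1) ^+ i * (- x) ^+ ((1 + i) %/ 2)
  | Negz k =>
      let m := k.+1 in
      \sum_(i < 2 * m)
        ('C((2 * m + i).-1 %/ 2, i))%:R * M ^+ (4 * m - 2)
          * (- M ^+ 2 - M ^- 2 - x + 1) ^+ i * (- x) ^+ ((1 + i) %/ 2)
  end.

(* Main.v *)
Require Import Defs.
From HB Require Import structures.
From mathcomp Require Import all_boot all_order all_algebra.
From mathcomp Require Import complex.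
From mathcomp Require Import reals.
From mathcomp Require Import zify ring.
Import Order.TTheory GRing.Theory Num.Theory.
Local Open Scope ring_scope.

Section Comb.
Variable C : fieldType.
Variable w : C.

Definition Esum k N := \sum_(j < N) ('C(k + j, 2 * j))%:R * w ^+ j.
Definition Osum k N := \sum_(j < N) ('C(k + j, (2 * j).+1))%:R * w ^+ j.

Lemma Esum_trunc k N : (k < N)%N -> Esum k N.+1 = Esum k N.
Proof.
move=> h; rewrite /Esum big_ord_recr /= bin_small ?mul0r ?addr0 //; lia.
Qed.
Lemma Osum_trunc k N : (k <= N)%N -> Osum k N.+1 = Osum k N.
Proof.
move=> h; rewrite /Osum big_ord_recr /= bin_small ?mul0r ?addr0 //; lia.
Qed.
Lemma Osum_rec k N : Osum k.+1 N = Osum k N + Esum k N.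
Proof.
rewrite /Osum /Esum -big_split /=; apply: eq_bigr => j _.
by rewrite addSn binS natrD mulrDl.
Qed.
Lemma Esum_rec k N : Esum k.+1 N.+1 = Esum k N.+1 + w * Osum k.+1 N.
Proof.
rewrite /Esum /Osum !big_ord_recl /= !addn0 !bin0 -addrA; congr (_ + _).
rewrite mulr_sumr -big_split /=; apply: eq_bigr => j _.
rewrite /bump /= !add1n addnS mulnS !addSn binS natrD mulrDl exprS.
rewrite add0n addnS; congr (_ + _); ring.
Qed.

Fixpoint ppq (t : C) (k : nat) : C * C :=
  match k with 0%N => (0, -1) | k'.+1 => let pq := ppq t k' in (t * pq.1 - pq.2, pq.1) end.

Lemma EO_pq k : Osum k k.+1 = (ppq (2 + w) k).1 /\
   Esum k k.+1 = (1 + w) * (ppq (2 + w) k).1 - (ppq (2 + w) k).2.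
Proof.
elim: k => [|k [IHo IHe]].
  rewrite /Osum /Esum !big_ord1 /= bin0 bin_small //= !mul0r; split => //; ring.
have hO : Osum k.+1 k.+2 = (ppq (2 + w) k.+1).1.
  rewrite Osum_rec Osum_trunc // Esum_trunc // IHo IHe /=; ring.
split => //.
rewrite Esum_rec Esum_trunc // IHe -Osum_trunc // hO /=; ring.
Qed.
End Comb.
Arguments Esum {C}. Arguments Osum {C}. Arguments ppq {C}. Arguments EO_pq {C}. Arguments Osum_trunc {C}. Arguments Esum_trunc {C}. Arguments Osum_rec {C}. Arguments Esum_rec {C}.
Section Mx.
Variable C : fieldType.
Definition mx2 (a b c d : C) : 'M[C]_2 :=
  \matrix_(i < 2, j < 2)
    if i == 0 then (if j == 0 then a else b) else (if j == 0 then c else d).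

Lemma mx2_mul (a b c d a' b' c' d' : C) :
  mx2 a b c d * mx2 a' b' c' d' =
  mx2 (a*a'+b*c') (a*b'+b*d') (c*a'+d*c') (c*b'+d*d').
Proof.
apply/matrixP => i j; rewrite !mxE !big_ord_recl big_ord0 !mxE /=.
by case: i => [[|[|//]] ?]; case: j => [[|[|//]] ?]; rewrite /= addr0.
Qed.

Lemma mx2_one : (1 : 'M[C]_2) = mx2 1 0 0 1.
Proof.
apply/matrixP => i j; rewrite !mxE.
by case: i => [[|[|//]] ?]; case: j => [[|[|//]] ?].
Qed.

Lemma mx2_inj (a b c d a' b' c' d' : C) : mx2 a b c d = mx2 a' b' c' d' ->
  [/\ a = a', b = b', c = c' & d = d'].
Proof.
move=> h; have h00 := congr1 (fun X : 'M[C]_2 => X 0 0) h.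
have h01 := congr1 (fun X : 'M[C]_2 => X 0 1) h.
have h10 := congr1 (fun X : 'M[C]_2 => X 1 0) h.
have h11 := congr1 (fun X : 'M[C]_2 => X 1 1) h.
by move: h00 h01 h10 h11; rewrite !mxE /=.
Qed.

Lemma inv_eq (R : unitRingType) (x y : R) : x * y = 1 -> y * x = 1 ->
  x \is a GRing.unit /\ x^-1 = y.
Proof.
move=> h1 h2; have u : x \is a GRing.unit by apply/unitrP; exists y.
split => //; by rewrite -[x^-1]mulr1 -h1 mulrA mulVr ?mul1r.
Qed.

Lemma mx2_inv (a b c d : C) : a * d - b * c = 1 ->
  mx2 a b c d \is a GRing.unit /\ (mx2 a b c d)^-1 = mx2 d (-b) (-c) a.
Proof.
move=> h; apply: inv_eq; rewrite mx2_mul mx2_one; congr mx2;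
  first [ring | rewrite -h; ring].
Qed.


Lemma mx2_pow (a b c d : C) k : a * d - b * c = 1 ->
  let pq := ppq (a + d) k in
  mx2 a b c d ^+ k = mx2 (pq.1 * a - pq.2) (pq.1 * b) (pq.1 * c) (pq.1 * d - pq.2).
Proof.
move=> h; elim: k => [|k IH] /=.
  by rewrite expr0 mx2_one; congr mx2; ring.
rewrite exprS IH mx2_mul; case: (ppq (a + d) k) => p q /=.
congr mx2.
- apply/eqP; rewrite -subr_eq0; apply/eqP.
  have -> : a * (p * a - q) + b * (p * c) - (((a + d) * p - q) * a - p) = - p * (a * d - b * c - 1) by ring.
  by rewrite h subrr mulr0.
- ring.
- ring.
- apply/eqP; rewrite -subr_eq0; apply/eqP.
  have -> : c * (p * b) + d * (p * d - q) - (((a + d) * p - q) * d - p) = - p * (a * d - b * c - 1) by ring.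
  by rewrite h subrr mulr0.
Qed.
End Mx.
Arguments mx2 {C}. Arguments mx2_mul {C}. Arguments mx2_one {C}. Arguments mx2_inj {C}. Arguments mx2_inv {C}. Arguments mx2_pow {C}.
Section P.
Variable C : fieldType.

Lemma sum_split (F : nat -> C) N :
  \sum_(i < 2 * N) F i = \sum_(j < N) F (2 * j)%N + \sum_(j < N) F (2 * j).+1.
Proof.
elim: N => [|N IH]; first by rewrite !big_ord0 addr0.
have -> : (2 * N.+1 = (2 * N).+2)%N by lia.
rewrite !big_ord_recr /= IH -!addrA; congr (_ + _).
by rewrite addrCA addrA.
Qed.

Lemma d1 j : ((2 * j) %/ 2 = j)%N. Proof. lia. Qed.
Lemma d2 j : ((1 + 2 * j) %/ 2 = j)%N. Proof. lia. Qed.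
Lemma d3 j : ((2 * j).+1 %/ 2 = j)%N. Proof. lia. Qed.
Lemma d4 j : ((1 + (2 * j).+1) %/ 2 = j.+1)%N. Proof. lia. Qed.

Definition Fpos (k : nat) (M x : C) (i : nat) :=
  ('C(k + i %/ 2, i))%:R * M ^+ (4 * k)
          * (M ^+ 2 + M ^- 2 + x - 1) ^+ i * (- x) ^+ ((1 + i) %/ 2).

Lemma P2n_pos_aux k (M x z : C) : z = M ^+ 2 + M ^- 2 + x - 1 ->
  \sum_(i < (2 * k).+1) Fpos k M x i =
  M ^+ (4 * k) * (Esum (- x * z ^+ 2) k k.+1 + (- x * z) * Osum (- x * z ^+ 2) k k.+1).
Proof.
move=> hz.
have -> : \sum_(i < (2 * k).+1) Fpos k M x i = \sum_(i < 2 * k.+1) Fpos k M x i.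
  have -> : (2 * k.+1 = (2 * k).+2)%N by lia.
  rewrite [RHS]big_ord_recr /= [Fpos k M x (2 * k).+1]/Fpos bin_small ?mul0r ?addr0 //; lia.
rewrite sum_split mulrDr /Esum /Osum !mulr_sumr; congr (_ + _); apply: eq_bigr => j _;
  rewrite /Fpos -hz.
- rewrite (d1 j) (d2 j) exprMn [z ^+ (2 * _)]exprM; ring.
- rewrite (d3 j) (d4 j) exprMn [z ^+ (2 * _).+1]exprS [(- x) ^+ j.+1]exprS [z ^+ (2 * _)]exprM; ring.
Qed.

Definition Fneg (m : nat) (M x : C) (i : nat) :=
  ('C((2 * m + i).-1 %/ 2, i))%:R * M ^+ (4 * m - 2)
          * (- M ^+ 2 - M ^- 2 - x + 1) ^+ i * (- x) ^+ ((1 + i) %/ 2).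

Lemma e1 k j : ((2 * k.+1 + 2 * j).-1 %/ 2 = k + j)%N. Proof. lia. Qed.
Lemma e2 k j : ((2 * k.+1 + (2 * j).+1).-1 %/ 2 = k.+1 + j)%N. Proof. lia. Qed.

Lemma P2n_neg_aux k (M x z : C) : z = M ^+ 2 + M ^- 2 + x - 1 ->
  \sum_(i < 2 * k.+1) Fneg k.+1 M x i =
  M ^+ (4 * k.+1 - 2) * (Esum (- x * z ^+ 2) k k.+1 + (x * z) * Osum (- x * z ^+ 2) k.+1 k.+1).
Proof.
move=> hz.
have hz' : - M ^+ 2 - M ^- 2 - x + 1 = - z by rewrite hz; ring.
rewrite sum_split mulrDr /Esum /Osum !mulr_sumr; congr (_ + _); apply: eq_bigr => j _;
  rewrite /Fneg hz'.
- rewrite (e1 k j) (d2 j) exprMn [(- z) ^+ (2 * _)]exprM sqrrN; ring.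
- rewrite (e2 k j) (d4 j) exprMn [(- z) ^+ (2 * _).+1]exprS [(- x) ^+ j.+1]exprS [(- z) ^+ (2 * _)]exprM sqrrN; ring.
Qed.
End P.
Arguments Fpos {C}. Arguments Fneg {C}. Arguments P2n_pos_aux {C}. Arguments P2n_neg_aux {C}. Arguments sum_split {C}.

Lemma rel_iff (R : unitRingType) (S T W : R) :
  T \is a GRing.unit -> W \is a GRing.unit ->
  (S * W * T^-1 * W^-1 = 1 <-> S * W = W * T).
Proof.
move=> uT uW; split => h.
- have := congr1 (fun X => X * W * T) h.
  by rewrite /= divrK // divrK // !mul1r.
- by rewrite h mulrK // divrr.
Qed.

Lemma cond_iff (C : fieldType) (M y w11 w12 w22 : C) :
  mx2 M 1 0 M^-1 * mx2 w11 w12 (y * w12) w22 = mx2 w11 w12 (y * w12) w22 * mx2 M 0 y M^-1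
  <-> w22 = (M^-1 - M) * w12.
Proof.
rewrite !mx2_mul; split => [/mx2_inj [_ h _ _]| h].
- have -> : w22 = (M * w12 + 1 * w22) - M * w12 by ring.
  rewrite h; ring.
- rewrite h; congr mx2; ring.
Qed.

Section Main.
Variable C : fieldType.
Variables M x : C.
Hypothesis hM : M != 0.
Let y := 2 - M ^+ 2 - M ^- 2 - x.
Let z := M ^+ 2 + M ^- 2 + x - 1.
Let a11 := 2 * M^+2 - 2 * M^+4 + M^+6 + x - 2 * x * M^+2 + 2 * x * M^+4 + x^+2 * M^+2.
Let a12 := M - M^+3 + M^+5 + x * M^-1 - x * M + 2 * x * M^+3 + x^+2 * M.
Let a22 := 2 - 2 * M^+2 + 2 * M^+4 - M^+6 - x * M^-4 + 2 * x * M^-2 - 4 * x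
   + 4 * x * M^+2 - 3 * x * M^+4 - 2 * x^+2 * M^-2 + 2 * x^+2 - 3 * x^+2 * M^+2 - x^+3.

Lemma hA : mx2 M 0 y M^-1 * mx2 M^-1 (-1) (-0) M * mx2 M 0 y M^-1 * mx2 M 1 0 M^-1
  * mx2 M^-1 (-0) (-y) M * mx2 M 1 0 M^-1 = mx2 a11 a12 (y * a12) a22.
Proof. rewrite !mx2_mul /y /a11 /a12 /a22; congr mx2; field; exact: hM. Qed.

Lemma hdet : a11 * a22 - a12 * (y * a12) = 1.
Proof. rewrite /y /a11 /a12 /a22; field; exact: hM. Qed.

Lemma htr : a11 + a22 = 2 + (- x * z ^+ 2).
Proof. rewrite /z /a11 /a22; field; exact: hM. Qed.

Lemma hc : a22 + (M - M^-1) * a12 = 1 + (- x * z ^+ 2) - x * z.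
Proof. rewrite /z /a22 /a12; field; exact: hM. Qed.

Lemma main_sec (n : int) :
  defines_rep n (mx2 M 1 0 M^-1) (mx2 M 0 y M^-1) <-> P2n n x M = 0.
Proof.
have dS : M * M^-1 - 1 * 0 = 1 by rewrite mulr0 subr0 divff.
have dT : M * M^-1 - 0 * y = 1 by rewrite mul0r subr0 divff.
have [uS iS] := mx2_inv _ _ _ _ dS.
have [uT iT] := mx2_inv _ _ _ _ dT.
have [uA iA] := mx2_inv _ _ _ _ hdet.
rewrite /defines_rep /word_w.
set S := mx2 M 1 0 M^-1. set T := mx2 M 0 y M^-1.
have eA : T * S^-1 * T * S * T^-1 * S = mx2 a11 a12 (y*a12) a22 by rewrite iS iT hA.
rewrite eA.
have hz : z = M ^+ 2 + M ^- 2 + x - 1 by [].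
case: n => k.
- have -> : mx2 a11 a12 (y * a12) a22 ^ Posz k = mx2 a11 a12 (y * a12) a22 ^+ k by [].
  rewrite rel_iff ?unitrX // mx2_pow ?hdet // htr.
  have -> : P2n (Posz k) x M = \sum_(i < (2 * k).+1) Fpos k M x i by [].
  rewrite (P2n_pos_aux k M x z hz).
  have [ho he] := EO_pq (- x * z ^+ 2) k.
  rewrite ho he; move: (ppq _ k) => [p q] /=.
  rewrite [p * (y * a12)]mulrCA cond_iff.
  have e1 : (1 + - x * z ^+ 2) * p - q + - x * z * p = p * (a22 + (M - M^-1) * a12) - q.
    rewrite hc; ring.
  have e2 : (p * a22 - q) - (M^-1 - M) * (p * a12) = p * (a22 + (M - M^-1) * a12) - q by ring.
  rewrite e1 -e2; split => [->|/eqP]; first by rewrite subrr mulr0.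
  rewrite mulf_eq0 expf_eq0 (negbTE hM) andbF /= subr_eq0 => /eqP //.
- have -> : mx2 a11 a12 (y * a12) a22 ^ Negz k = (mx2 a11 a12 (y * a12) a22)^-1 ^+ k.+1.
    by rewrite exprVn.
  have dB : a22 * a11 - (- a12) * (- (y * a12)) = 1 by rewrite -hdet; ring.
  have tB : a22 + a11 = 2 + (- x * z ^+ 2) by rewrite addrC htr.
  rewrite rel_iff ?unitrX ?unitrV // iA mx2_pow // tB.
  have -> : P2n (Negz k) x M = \sum_(i < 2 * k.+1) Fneg k.+1 M x i by [].
  rewrite (P2n_neg_aux k M x z hz) -Osum_trunc //.
  have [ho he] := EO_pq (- x * z ^+ 2) k.
  have [ho1 _] := EO_pq (- x * z ^+ 2) k.+1.
  rewrite ho1 he /=; move: (ppq _ k) => [p q] /=.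
  set P := (2 + - x * z ^+ 2) * p - q.
  have -> : P * - (y * a12) = y * (P * - a12) by ring.
  rewrite cond_iff.
  have e2 : (P * a11 - p) - (M^-1 - M) * (P * - a12)
     = P * ((a11 + a22) - (a22 + (M - M^-1) * a12)) - p by ring.
  rewrite htr hc in e2.
  have e1 : (1 + - x * z ^+ 2) * p - q + x * z * P
     = P * (2 + - x * z ^+ 2 - (1 + - x * z ^+ 2 - x * z)) - p by rewrite /P; ring.
  rewrite e1 -e2; split => [->|/eqP]; first by rewrite subrr mulr0.
  rewrite mulf_eq0 expf_eq0 (negbTE hM) andbF /= subr_eq0 => /eqP //.
Qed.

End Main.

Theorem lemma1 (R : realType) (n : int) (M x : R[i]) :
  M != 0 ->
  (defines_rep n (rho_s M) (rho_t M x) <-> P2n n x M = 0).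
Proof.
move=> hM; exact: (main_sec _ M x hM n). Qed.
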